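(* For all integers $1\le q\le k$, $g(k,q)\le u(k,q)$, where $g(k,q)$ is the smallest cardinality of a subset of $\{-1,+1\}^k$ intersecting every $(k-q)$-subcube, and $u(k,q)$ is the smallest cardinality of a set of uniqueness for $(\mathcal{B}^k_q)_+$.
   Context: Let $\mathcal{X}=\{-1,+1\}^k$. A $(k-q)$-subcube of $\mathcal{X}$ is a set obtained by fixing the values of exactly $q$ coordinates and letting the other $k-q$ coordinates range freely. For $L\subseteq\{1,\ldots,k\}$ let $w_L(x)=\prod_{j\in L}x_j$ (with $w_\emptyset\equiv 1$); $\mathcal{B}^k_q$ is the linear span of $\{w_L:|L|\le q\}$ and $(\mathcal{B}^k_q)_+=\{\varphi\in\mathcal{B}^k_q:\varphi\ge 0\}$. A set $U\subseteq\mathcal{X}$ is a set of uniqueness for $(\mathcal{B}^k_q)_+$ if the only $\varphi\in(\mathcal{B}^k_q)_+$ vanishing on $U$ is $\varphi\equiv 0$. *)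

(* Defs.v *)
From HB Require Import structures.
From mathcomp Require Import all_boot all_order all_algebra.
From mathcomp Require Import boolp reals.
Set Implicit Arguments. Unset Strict Implicit. Unset Printing Implicit Defensive.
Import Order.TTheory GRing.Theory Num.Theory.
Local Open Scope ring_scope.

(* The hypercube {-1,+1}^k: a point is x : 'I_k -> bool, with
   true encoding +1 and false encoding -1. *)
Definition cube (k : nat) := {ffun 'I_k -> bool}.

Definition sgn (R : realType) (b : bool) : R := if b then 1 else -1.

Definition walsh (R : realType) (k : nat) (L : {set 'I_k}) (x : cube k) : R :=
  \prod_(j in L) sgn R (x j).

Definition in_B (R : realType) (k q : nat) (phi : cube k -> R) : Prop :=
  exists c : {set 'I_k} -> R,
    (forall L : {set 'I_k}, (q < #|L|)%N -> c L = 0) /\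
    forall x, phi x = \sum_(L : {set 'I_k}) c L * walsh R L x.

Definition in_B_plus (R : realType) (k q : nat) (phi : cube k -> R) : Prop :=
  in_B q phi /\ forall x, 0 <= phi x.

Definition uniqueness_set (R : realType) (k q : nat) (U : {set cube k}) : Prop :=
  forall phi : cube k -> R, in_B_plus q phi ->
    (forall x, x \in U -> phi x = 0) -> forall x, phi x = 0.

Definition subcube (k : nat) (S : {set 'I_k}) (a : cube k) : {set cube k} :=
  [set x : cube k | [forall j in S, x j == a j]].

Definition hits_all_subcubes (k q : nat) (H : {set cube k}) : Prop :=
  forall (S : {set 'I_k}) (a : cube k), #|S| = q ->
    exists2 x, x \in H & x \in subcube S a.

(* g(k,q): smallest cardinality of a set meeting every (k-q)-subcube.
   (The whole cube is such a set, so the default #|cube k| is harmless.) *)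
Definition g_num (k q : nat) : nat :=
  \big[minn/#|[set: cube k]|]_(H : {set cube k} | `[< hits_all_subcubes q H >]) #|H|.

(* u(k,q): smallest cardinality of a set of uniqueness for (B^k_q)_+.
   (The whole cube is such a set.) *)
Definition u_num (R : realType) (k q : nat) : nat :=
  \big[minn/#|[set: cube k]|]_(U : {set cube k} | `[< uniqueness_set R q U >]) #|U|.

(* Main.v *)
Require Import Defs.
From mathcomp Require Import all_boot all_order all_algebra.
From mathcomp Require Import reals.
From mathcomp Require Import boolp.
Set Implicit Arguments. Unset Strict Implicit. Unset Printing Implicit Defensive.
Import Order.TTheory GRing.Theory Num.Theory.
Local Open Scope ring_scope.

Section Aux.
Variables (R : realType) (k : nat) (S : {set 'I_k}) (a : cube k).

Definition cA (i : 'I_k) : R := if i \in S then sgn R (a i) / 2 else 0.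
Definition cB (i : 'I_k) : R := if i \in S then 1 / 2 else 1.
Definition cc (J : {set 'I_k}) : R := \prod_i (if i \in J then cA i else cB i).
Definition phi0 (x : cube k) : R := \prod_i (cA i * sgn R (x i) + cB i).

Lemma phi0_B x : phi0 x = \sum_(J : {set 'I_k}) cc J * walsh R J x.
Proof.
rewrite /phi0 bigA_distr; apply: eq_big => // J _.
rewrite /cc /walsh [X in _ * X]big_mkcond -big_split /=.
by apply: eq_bigr => i _; case: (i \in J); rewrite ?mulr1.
Qed.

Lemma cc0 (J : {set 'I_k}) : ~~ (J \subset S) -> cc J = 0.
Proof.
case/subsetPn => i iJ iS; rewrite /cc (bigD1 i) //= iJ /cA (negbTE iS).
by rewrite mul0r.
Qed.

Lemma sgn_sq b c : sgn R b * sgn R c = 1 \/ sgn R b * sgn R c = -1.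
Proof. by case: b; case: c; rewrite /sgn ?mulr1 ?mul1r ?mulrNN ?mulr1; auto. Qed.

Lemma factorE i x : cA i * sgn R (x i) + cB i =
  if i \in S then (1 + sgn R (a i) * sgn R (x i)) / 2 else 1.
Proof.
rewrite /cA /cB; case: (i \in S); last by rewrite mul0r add0r.
by rewrite mulrDl mul1r addrC mulrAC.
Qed.

Lemma phi0_ge0 x : 0 <= phi0 x.
Proof.
apply: prodr_ge0 => i _; rewrite factorE; case: (i \in S) => //.
apply: divr_ge0 => //; case: (sgn_sq (a i) (x i)) => ->; rewrite ?subrr //.
by apply: addr_ge0.
Qed.

Lemma phi0_out x : x \notin subcube S a -> phi0 x = 0.
Proof.
rewrite inE => /forallPn [i]; rewrite negb_imply => /andP [iS ne].
rewrite /phi0 (bigD1 i) //= factorE iS.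
have -> : sgn R (a i) * sgn R (x i) = -1.
  by move: ne; case: (a i); case: (x i); rewrite /sgn ?mulr1 ?mul1r ?mulrN.
by rewrite subrr mul0r mul0r.
Qed.

Lemma phi0_a : phi0 a = 1.
Proof.
rewrite /phi0; apply: big1 => i _; rewrite factorE; case: (i \in S) => //.
have -> : sgn R (a i) * sgn R (a i) = 1.
  by case: (a i); rewrite /sgn ?mulr1 ?mulrNN ?mulr1.
by rewrite (_ : 1 + 1 = 2%:R :> R) // divff // pnatr_eq0.
Qed.
End Aux.

Lemma uniq_hits (R : realType) (k q : nat) (U : {set cube k}) :
  uniqueness_set R q U -> hits_all_subcubes q U.
Proof.
move=> HU S a HS.
case: (boolP [exists x in U, x \in subcube S a]).
  by case/exists_inP => x xU xS; exists x.
move/exists_inPn => Hn; exfalso.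
have H1 : in_B_plus q (phi0 R S a).
  split; last exact: phi0_ge0.
  exists (cc R S a); split; last exact: phi0_B.
  move=> L HL; apply: cc0; apply/negP => sub.
  by move: (subset_leq_card sub); rewrite HS leqNgt HL.
have := HU _ H1 (fun x xU => @phi0_out R k S a x (Hn x xU)) a.
by rewrite phi0_a => /eqP; rewrite oner_eq0.
Qed.

Lemma bigmin_sub (T : finType) (P Q : pred T) (f : T -> nat) d :
  (forall x, P x -> Q x) ->
  (\big[minn/d]_(x | Q x) f x <= \big[minn/d]_(x | P x) f x)%N.
Proof.
move=> PQ; apply: (big_ind (fun n => \big[minn/d]_(x | Q x) f x <= n)%N).
- by apply: (big_rec (fun n => n <= d)%N) => // i n _ Hn; rewrite geq_min Hn orbT.
- by move=> m n Hm Hn; rewrite leq_min Hm Hn.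
- move=> x Px; rewrite unlock /=.
  have : x \in index_enum T by rewrite mem_index_enum.
  elim: (index_enum T) => // y r IH; rewrite inE /=.
  case/orP => [/eqP <-|xr].
    by rewrite /= PQ //= geq_minl.
  case: (Q y) => /=; last exact: IH.
  by rewrite geq_min IH ?orbT.
Qed.

Theorem corollary2 (R : realType) (k q : nat) :
  (1 <= q)%N -> (q <= k)%N -> (g_num k q <= u_num R k q)%N.
Proof.
move=> _ _; rewrite /g_num /u_num; apply: bigmin_sub => U /asboolP HU.
by apply/asboolP; apply: uniq_hits HU.
Qed.
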